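(* In the setting described in the context, the map $\varphi$ defined by $\varphi(d)(x,y)=d(x,\cdot)+d(y,\cdot)-d(x,y)-d(\cdot,\cdot)+m$ is a bijection from the set of metrics on $A$ that belong to $\mathcal{B}_2$ onto the set of $\Sigma_m$-proximities on $A$, with inverse $\psi(\sigma)(x,y)=\tfrac12(\sigma(x,x)+\sigma(y,y))-\sigma(x,y)$.
   Context: $A$ is a nonempty set (possibly infinite); $m\in\mathbb{R}$. A metric on $A$ is a function $d:A^2\to\mathbb{R}$ such that for all $x,y,z\in A$: $d(x,y)=0$ iff $x=y$, and $d(x,y)+d(x,z)-d(y,z)\ge0$. $\mathcal{B}_1$ is a set of functions $A\to\mathbb{R}$ forming a real linear space containing all constant functions, and $\mu:\mathcal{B}_1\to\mathbb{R}$ is a linear functional with $\mu(c)=c$ for every constant function $c$ and monotone: if $f,g\in\mathcal{B}_1$ and $f\ge g$ pointwise, then $\mu(f)\ge\mu(g)$. For $f:A^2\to\mathbb{R}$ such that $y\mapsto f(x,y)$ lies in $\mathcal{B}_1$ for every $x$, write $f(x,\cdot)=\mu(y\mapsto f(x,y))$. $\mathcal{B}_2$ is a set of functions $A^2\to\mathbb{R}$ forming a real linear space that contains all constant functions and all functions $(x,y)\mapsto h(x)$ and $(x,y)\mapsto h(y)$ with $h\in\mathcal{B}_1$, and such that for every $f\in\mathcal{B}_2$: $y\mapsto f(x,y)\in\mathcal{B}_1$ for every $x$, $x\mapsto f(x,\cdot)\in\mathcal{B}_1$, and $x\mapsto f(x,x)\in\mathcal{B}_1$. For a symmetric $d\in\mathcal{B}_2$,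 $d(\cdot,\cdot)=\mu(x\mapsto d(x,\cdot))$. A function $\sigma\in\mathcal{B}_2$ is a $\Sigma_m$-proximity on $A$ if for all $x,y,z\in A$: (1) $\sigma(x,\cdot)=m$; (2) $\sigma(x,y)+\sigma(x,z)-\sigma(y,z)\le\sigma(x,x)$, with strict inequality whenever $z=y$ and $x\ne y$. *)

(* Defs.v *)
From Stdlib Require Import Reals.
Open Scope R_scope.

Definition lin_space_with_consts {T : Type} (B : (T -> R) -> Prop) : Prop :=
  (forall f g, B f -> B g -> B (fun x => f x + g x)) /\
  (forall (c : R) f, B f -> B (fun x => c * f x)) /\
  (forall c : R, B (fun _ => c)).

Definition mean_setting (A : Type) (B1 : (A -> R) -> Prop) (mu : (A -> R) -> R)
  (B2 : (A -> A -> R) -> Prop) : Prop :=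
  lin_space_with_consts B1 /\
  (forall f g (a b : R), B1 f -> B1 g ->
      mu (fun x => a * f x + b * g x) = a * mu f + b * mu g) /\
  (forall c : R, mu (fun _ => c) = c) /\
  (forall f g, B1 f -> B1 g -> (forall x, g x <= f x) -> mu g <= mu f) /\
  (forall f g, B2 f -> B2 g -> B2 (fun x y => f x y + g x y)) /\
  (forall (c : R) f, B2 f -> B2 (fun x y => c * f x y)) /\
  (forall c : R, B2 (fun _ _ => c)) /\
  (forall h, B1 h -> B2 (fun x _ => h x)) /\
  (forall h, B1 h -> B2 (fun _ y => h y)) /\
  (forall f, B2 f ->
     (forall x, B1 (fun y => f x y)) /\
     B1 (fun x => mu (fun y => f x y)) /\
     B1 (fun x => f x x)).

(* f(x,.) = mu (y |-> f(x,y)) *)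
Definition dot1 {A : Type} (mu : (A -> R) -> R) (f : A -> A -> R) (x : A) : R :=
  mu (fun y => f x y).

(* d(.,.) = mu (x |-> d(x,.)) *)
Definition dot2 {A : Type} (mu : (A -> R) -> R) (f : A -> A -> R) : R :=
  mu (fun x => dot1 mu f x).

Definition is_metric {A : Type} (d : A -> A -> R) : Prop :=
  forall x y z, (d x y = 0 <-> x = y) /\ d x y + d x z - d y z >= 0.

Definition is_Sigma_proximity {A : Type} (mu : (A -> R) -> R)
  (B2 : (A -> A -> R) -> Prop) (m : R) (s : A -> A -> R) : Prop :=
  B2 s /\
  (forall x, dot1 mu s x = m) /\
  (forall x y z,
     s x y + s x z - s y z <= s x x /\
     (z = y -> x <> y -> s x y + s x z - s y z < s x x)).

Definition phi {A : Type} (mu : (A -> R) -> R) (m : R) (d : A -> A -> R) : A -> A -> R :=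
  fun x y => dot1 mu d x + dot1 mu d y - d x y - dot2 mu d + m.

Definition psi {A : Type} (s : A -> A -> R) : A -> A -> R :=
  fun x y => / 2 * (s x x + s y y) - s x y.

(* Main.v *)
Require Import Defs.
From Stdlib Require Import Reals Lra FunctionalExtensionality Classical.
Open Scope R_scope.

Lemma mu_aff (A : Type) (B1 : (A -> R) -> Prop) (mu : (A -> R) -> R)
  (B2 : (A -> A -> R) -> Prop) (Hset : mean_setting A B1 mu B2)
  f g a b e : B1 f -> B1 g ->
  mu (fun y => a + b * f y + e * g y) = a + b * mu f + e * mu g.
Proof.
  destruct Hset as [[Hadd [Hsc Hc]] [Hlin [Hmc _]]].
  intros Hf Hg.
  set (h := fun y => b * f y + e * g y).
  assert (Hh : B1 h) by (apply Hadd; apply Hsc; auto).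
  assert (E : (fun y => a + b * f y + e * g y) =
              (fun y => 1 * h y + a * (fun _ => 1) y)).
  { apply functional_extensionality; intro y; unfold h; simpl; ring. }
  rewrite E, (Hlin h (fun _ => 1) 1 a Hh (Hc 1)), Hmc.
  unfold h; rewrite (Hlin f g b e Hf Hg); ring.
Qed.

Lemma metric_facts (A : Type) (d : A -> A -> R) : is_metric d ->
  (forall x, d x x = 0) /\ (forall x y, d x y = d y x) /\ (forall x y, 0 <= d x y)
  /\ (forall x y z, d y z <= d x y + d x z).
Proof.
  intros H.
  assert (H0 : forall x, d x x = 0) by (intro x; apply (proj1 (H x x x)); auto).
  assert (Hs : forall x y, d x y = d y x).
  { intros x y. pose proof (proj2 (H x y x)). pose proof (proj2 (H y x y)).
    rewrite H0 in *. lra. }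
  split; [auto|split; [auto|split]].
  - intros x y. pose proof (proj2 (H x y y)). rewrite H0 in *. lra.
  - intros x y z. pose proof (proj2 (H x y z)). lra.
Qed.

Theorem theorem1 (A : Type) (HA : inhabited A) (m : R)
  (B1 : (A -> R) -> Prop) (mu : (A -> R) -> R) (B2 : (A -> A -> R) -> Prop)
  (Hset : mean_setting A B1 mu B2) :
  (forall d, is_metric d -> B2 d -> is_Sigma_proximity mu B2 m (phi mu m d)) /\
  (forall s, is_Sigma_proximity mu B2 m s -> is_metric (psi s) /\ B2 (psi s)) /\
  (forall d, is_metric d -> B2 d -> psi (phi mu m d) = d) /\
  (forall s, is_Sigma_proximity mu B2 m s -> phi mu m (psi s) = s).
Proof.
  pose proof (mu_aff A B1 mu B2 Hset) as MA.
  destruct Hset as [[B1add [B1sc B1c]] [_ [_ [_ [H2add [H2sc [H2c [H2l [H2r H2B]]]]]]]]].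
  split; [|split; [|split]].
  - intros d Hd Hb.
    destruct (metric_facts A d Hd) as [H0 [Hs [Hn Ht]]].
    destruct (H2B d Hb) as [Hrow [HD Hdiag]].
    split; [|split].
    + unfold phi.
      assert (E : (fun x y => dot1 mu d x + dot1 mu d y - d x y - dot2 mu d + m) =
        (fun x y => (fun x y => (fun x _ => dot1 mu d x) x y + (fun _ y => dot1 mu d y) x y) x y
           + (fun x y => (fun x y => -1 * d x y) x y + (fun _ _ => m - dot2 mu d) x y) x y)).
      { apply functional_extensionality; intro x; apply functional_extensionality; intro y.
        simpl; ring. }
      rewrite E. apply H2add; apply H2add.
      * apply H2l; exact HD.
      * apply H2r; exact HD.
      * apply H2sc; exact Hb.
      * apply H2c.
    + intro x. unfold dot1 at 1, phi.
      assert (E : (fun y => dot1 mu d x + dot1 mu d y - d x y - dot2 mu d + m) =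
        (fun y => (dot1 mu d x - dot2 mu d + m) + 1 * (fun y => dot1 mu d y) y + (-1) * (fun y => d x y) y)).
      { apply functional_extensionality; intro y; simpl; ring. }
      rewrite E, MA by auto. unfold dot2, dot1. replace (mu (d x)) with (mu (fun y => d x y)) by reflexivity. ring.
    + intros x y z. unfold phi. rewrite (H0 x). split.
      * pose proof (Ht x y z). lra.
      * intros -> Hxy. pose proof (Hn x y).
        assert (d x y <> 0) by (intro E; apply Hxy; apply (proj1 (Hd x y x)); auto).
        rewrite (H0 y). assert (0 < d x y) by (destruct (Rle_lt_or_eq_dec _ _ H) as [h|h]; [exact h| congruence]). lra.
  - intros s [Hb [Hdot Hin]].
    destruct (H2B s Hb) as [Hrow [HD Hdiag]].
    split.
    + intros x y z. unfold psi. split.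
      * split.
        -- intro E. destruct (Req_dec (s x x) (s x x)); [|lra].
           destruct (classic (x = y)) as [Hq|Hq]; [exact Hq|].
           exfalso. pose proof (proj2 (Hin x y y) eq_refl Hq). lra.
        -- intros ->. lra.
      * pose proof (proj1 (Hin x y z)). lra.
    + unfold psi.
      assert (E : (fun x y => / 2 * (s x x + s y y) - s x y) =
        (fun x y => (fun x y => (fun x _ => / 2 * s x x) x y + (fun _ y => / 2 * s y y) x y) x y
           + (fun x y => -1 * s x y) x y)).
      { apply functional_extensionality; intro x; apply functional_extensionality; intro y.
        simpl; ring. }
      rewrite E. apply H2add; [apply H2add|apply H2sc; auto].
      * apply (H2l (fun x => / 2 * s x x)).
        apply B1sc; exact Hdiag.
      * apply (H2r (fun y => / 2 * s y y)). apply B1sc; exact Hdiag.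
  - intros d Hd Hb.
    destruct (metric_facts A d Hd) as [H0 [Hs [Hn Ht]]].
    apply functional_extensionality; intro x; apply functional_extensionality; intro y.
    unfold psi, phi. rewrite (H0 x), (H0 y). field.
  - intros s [Hb [Hdot Hin]].
    destruct (H2B s Hb) as [Hrow [HD Hdiag]].
    set (M := mu (fun y => s y y)).
    assert (D1 : forall x, dot1 mu (psi s) x = / 2 * s x x + / 2 * M - m).
    { intro x. unfold dot1 at 1, psi.
      assert (E : (fun y => / 2 * (s x x + s y y) - s x y) =
        (fun y => / 2 * s x x + / 2 * (fun y => s y y) y + (-1) * (fun y => s x y) y)).
      { apply functional_extensionality; intro y; simpl; ring. }
      rewrite E, MA by auto. specialize (Hdot x). unfold dot1 in Hdot.
      replace (mu (s x)) with (mu (fun y => s x y)) by reflexivity.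
      rewrite Hdot. unfold M. ring. }
    assert (D2 : dot2 mu (psi s) = M - m).
    { unfold dot2.
      assert (E : (fun x => dot1 mu (psi s) x) =
        (fun x => (/ 2 * M - m) + / 2 * (fun y => s y y) x + 0 * (fun y => s y y) x)).
      { apply functional_extensionality; intro x; rewrite D1; simpl; ring. }
      rewrite E, MA by auto. replace (mu (fun y => s y y)) with M by reflexivity. lra. }
    apply functional_extensionality; intro x; apply functional_extensionality; intro y.
    unfold phi. rewrite D1, D1, D2. unfold psi. field.
Qed.
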